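(* Let $\mu\in(0,1/2]$. For every $(g_0,c_0)\in S$ there exists a smooth function $f:\mathbb R\to\mathbb R$ with $f(g_0)=c_0$ such that $$\frac{d}{dg}\Big|_{g=g_0}R_S(g,f(g))\neq0,$$ where $R_S(g,c)=2\sqrt{\frac{\sqrt{1-gc}}{g-c+2\sqrt{(1-2\mu)^2-gc}}}\,\frac{K(r_2)}{K(k_1)}$.
   Context: $c_J=-1-2\sqrt{\mu(1-\mu)}$, $c_h=-1+2\mu$. The region $S$ in the $(g,c)$-plane is $S=\{c<c_J,\ -c-2<g<-c-2(1-2\mu)\}\cup\{c_J\le c<c_h,\ (1-2\mu)^2/c<g<-c-2(1-2\mu)\}$. $K(k)=\frac{\pi}{2}\sum_{n\ge0}\big(\frac{(2n-1)!!}{(2n)!!}\big)^2k^{2n}$ is the complete elliptic integral of the first kind, $k_1^2=\frac12\big(1-\frac{g-c}{2\sqrt{1-gc}}\big)$, $r_2^2=\frac{g-c-2\sqrt{(1-2\mu)^2-gc}}{g-c+2\sqrt{(1-2\mu)^2-gc}}$. $R_S$ is the rotation function (ratio of $\eta$- to $\xi$-period) of the Euler problem with mass ratio $\mu$ in the region $S$. *)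

(* Defs.v *)
From Stdlib Require Import Arith Factorial Reals Lra ClassicalEpsilon.
Open Scope R_scope.

Definition cJ (mu : R) : R := -1 - 2 * sqrt (mu * (1 - mu)).
Definition ch (mu : R) : R := -1 + 2 * mu.

Definition inS (mu g c : R) : Prop :=
  (c < cJ mu /\ - c - 2 < g /\ g < - c - 2 * (1 - 2 * mu)) \/
  (cJ mu <= c /\ c < ch mu /\ (1 - 2 * mu) ^ 2 / c < g /\ g < - c - 2 * (1 - 2 * mu)).

(* ((2n-1)!!/(2n)!!) = (2n)! / (2^n n!)^2 *)
Definition Kcoef (n : nat) : R :=
  (INR (fact (2 * n)) / (2 ^ n * INR (fact n)) ^ 2) ^ 2.

Definition series_sum (a : nat -> R) : R :=
  epsilon (inhabits 0) (fun l => Un_cv (fun N => sum_f_R0 a N) l).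

(* Complete elliptic integral of the first kind, by its power series *)
Definition K (k : R) : R :=
  PI / 2 * series_sum (fun n => Kcoef n * k ^ (2 * n)).

Definition k1 (g c : R) : R :=
  sqrt (/ 2 * (1 - (g - c) / (2 * sqrt (1 - g * c)))).

Definition r2 (mu g c : R) : R :=
  sqrt ((g - c - 2 * sqrt ((1 - 2 * mu) ^ 2 - g * c)) /
        (g - c + 2 * sqrt ((1 - 2 * mu) ^ 2 - g * c))).

Definition RS (mu g c : R) : R :=
  2 * sqrt (sqrt (1 - g * c) / (g - c + 2 * sqrt ((1 - 2 * mu) ^ 2 - g * c)))
    * (K (r2 mu g c) / K (k1 g c)).

Fixpoint Cn (n : nat) (f : R -> R) : Prop :=
  match n with
  | O => continuity f
  | S m => exists f' : R -> R,
      (forall x, derivable_pt_lim f x (f' x)) /\ Cn m f'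
  end.

Definition smooth (f : R -> R) : Prop := forall n, Cn n f.

(* Main.v *)
Require Import Defs.
From Stdlib Require Import Arith Factorial Reals Lra Lia Psatz FunctionalExtensionality ClassicalEpsilon.
From Coquelicot Require Import Coquelicot.
Open Scope R_scope.
Lemma fact_bound n : INR (fact (2 * n)) <= (2 ^ n * INR (fact n)) ^ 2.
Proof.
  induction n.
  - simpl; lra.
  - replace (2 * S n)%nat with (S (S (2 * n))) by lia.
    change (fact (S (S (2 * n)))) with (S (S (2*n)) * (S (2*n) * fact (2*n)))%nat.
    change (fact (S n)) with (S n * fact n)%nat.
    rewrite !mult_INR, !S_INR, mult_INR. simpl (2 ^ S n).
    assert (0 <= INR n) by apply pos_INR.
    assert (0 <= INR (fact (2*n))) by apply pos_INR.
    replace (INR 2) with 2 by (simpl; lra).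
    replace ((2 * 2 ^ n * ((INR n + 1) * INR (fact n))) ^ 2) with
      (4 * (INR n + 1)^2 * (2 ^ n * INR (fact n)) ^ 2) by ring.
    assert (0 <= (2*INR n+2)*(2*INR n+1) <= 4*(INR n+1)^2) by nra.
    assert (0 <= 2 ^ n * INR (fact n)) by (apply Rmult_le_pos; [apply pow_le; lra| apply pos_INR]).
    nra.
Qed.

Lemma Kcoef_bounds n : 0 <= Kcoef n <= 1.
Proof.
  unfold Kcoef.
  assert (H1 := fact_bound n).
  assert (0 < INR (fact (2*n))) by (apply lt_0_INR, lt_O_fact).
  assert (0 < (2 ^ n * INR (fact n)) ^ 2).
  { apply pow_lt, Rmult_lt_0_compat. apply pow_lt; lra. apply lt_0_INR, lt_O_fact. }
  set (q := INR (fact (2 * n)) / (2 ^ n * INR (fact n)) ^ 2).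
  assert (0 <= q <= 1).
  { unfold q; split. apply Rlt_le, Rdiv_lt_0_compat; lra.
    unfold Rdiv. rewrite <- (Rinv_r ((2 ^ n * INR (fact n)) ^ 2)) by lra.
    apply Rmult_le_compat_r; auto. apply Rlt_le, Rinv_0_lt_compat; auto. }
  split; nra.
Qed.

Lemma CV_disk_K r : 0 <= r < 1 -> CV_disk Kcoef r.
Proof.
  intros Hr. unfold CV_disk.
  apply (@ex_series_le R_AbsRing R_CompleteNormedModule) with (b := fun n => r ^ n).
  - intros n. simpl. unfold abs; simpl.
    rewrite Rabs_Rabsolu, Rabs_mult, (Rabs_right (r^n)) by (apply Rle_ge, pow_le; lra).
    destruct (Kcoef_bounds n). rewrite Rabs_right by lra.
    assert (0 <= r^n) by (apply pow_le; lra). nra.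
  - apply ex_series_geom. rewrite Rabs_right; lra.
Qed.

Lemma radius_K y : Rabs y < 1 -> Rbar_lt (Rabs y) (CV_radius Kcoef).
Proof.
  intros Hy. set (r := (Rabs y + 1) / 2).
  assert (Hr : Rbar_le r (CV_radius Kcoef)).
  { unfold CV_radius. destruct (Lub_Rbar_correct (CV_disk Kcoef)) as [Hub _].
    apply Hub. apply CV_disk_K. assert (0 <= Rabs y) by apply Rabs_pos. unfold r; lra. }
  apply Rbar_lt_le_trans with r; auto. simpl. unfold r; lra.
Qed.

Lemma series_sum_eq a l : Un_cv (fun N => sum_f_R0 a N) l -> series_sum a = l.
Proof.
  intros H. unfold series_sum.
  assert (Hs := epsilon_spec (inhabits 0) (fun l => Un_cv (fun N => sum_f_R0 a N) l)
    (ex_intro _ l H)).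
  eapply UL_sequence; eauto.
Qed.

Lemma PSeries_cv y : Rabs y < 1 ->
  Un_cv (fun N => sum_f_R0 (fun n => Kcoef n * y ^ n) N) (PSeries Kcoef y).
Proof.
  intros Hy.
  assert (Hr := radius_K y Hy).
  assert (He : ex_series (fun n => Kcoef n * y ^ n)).
  { apply ex_series_Rabs. apply CV_disk_inside; auto. }
  assert (Hc := Series_correct _ He).
  apply is_series_Reals in Hc. exact Hc.
Qed.

Lemma K_sqrt y : 0 <= y < 1 -> K (sqrt y) = PI / 2 * PSeries Kcoef y.
Proof.
  intros Hy. unfold K. f_equal.
  replace (fun n => Kcoef n * sqrt y ^ (2 * n)) with (fun n => Kcoef n * y ^ n).
  2:{ apply functional_extensionality; intros n. rewrite pow_mult, pow2_sqrt by lra. reflexivity. }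
  apply series_sum_eq, PSeries_cv. rewrite Rabs_right; lra.
Qed.

Lemma Series_zero : Series (fun _ => 0) = 0.
Proof.
  rewrite (Series_ext (fun _ => 0) (fun n => 0 * 0)) by (intros; ring).
  rewrite Series_scal_l. ring.
Qed.

Lemma PSeries_K_pos y : 0 <= y < 1 -> 1 <= PSeries Kcoef y.
Proof.
  intros Hy.
  assert (Hr := radius_K y ltac:(rewrite Rabs_right; lra)).
  rewrite PSeries_decr_1 by (apply CV_radius_inside; auto).
  replace (Kcoef 0%nat) with 1 by (unfold Kcoef; simpl; lra).
  assert (0 <= PSeries (PS_decr_1 Kcoef) y).
  { unfold PSeries. replace 0 with (Series (fun _ => 0)) by apply Series_zero.
    apply Series_le.
    - intros n. split. lra. unfold PS_decr_1. destruct (Kcoef_bounds (S n)).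
      apply Rmult_le_pos; auto. apply pow_le; lra.
    - apply ex_series_Rabs. apply CV_disk_inside. rewrite CV_radius_decr_1; auto. }
  nra.
Qed.

Lemma PSeries_dK_nonneg y : 0 <= y < 1 -> 0 <= PSeries (PS_derive Kcoef) y.
Proof.
  intros Hy.
  assert (Hr := radius_K y ltac:(rewrite Rabs_right; lra)).
  unfold PSeries. replace 0 with (Series (fun _ => 0)) by apply Series_zero.
  apply Series_le.
  - intros n. split. lra. unfold PS_derive. destruct (Kcoef_bounds (S n)).
    apply Rmult_le_pos; [apply Rmult_le_pos; auto; apply pos_INR| apply pow_le; lra].
  - apply ex_series_Rabs. apply CV_disk_inside. rewrite CV_radius_derive; auto.
Qed.
Definition Eder (a w s P GY GX dGY dGX a' b' : R) : R :=
  let w' := - b' / (2*w) in let s' := - b' / (2*s) in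
  let X' := - (a'*w - a*w') / (4*w^2) in
  let Y' := 4*(a'*s - a*s') / (a+2*s)^2 in
  let Q' := (w'*(a+2*s) - w*(a'+2*s')) / (a+2*s)^2 in
  2*(Q'/(2*P) * GY/GX + P*(dGY*Y'*GX - GY*dGX*X')/GX^2).

Lemma Eder_neg a w s P GY GX dGY dGX : 0 < a -> 0 < s < w -> 0 < P -> 0 < GY -> 0 < GX ->
  0 <= dGY -> Eder a w s P GY GX dGY dGX a (-2*w*w) < 0.
Proof.
  intros. unfold Eder.
  replace (2 * ((- (-2 * w * w) / (2 * w) * (a + 2 * s) - w * (a + 2 * (- (-2 * w * w) / (2 * s)))) /
      (a + 2 * s) ^ 2 / (2 * P) * GY / GX +
     P * (dGY * (4 * (a * s - a * (- (-2 * w * w) / (2 * s))) / (a + 2 * s) ^ 2) * GX -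
          GY * dGX * (- (a * w - a * (- (-2 * w * w) / (2 * w))) / (4 * w ^ 2))) / GX ^ 2))
   with ((s*s - w*w) / (s * (a+2*s)^2) * (2*w*GY/(P*GX) + 8*a*P*dGY/GX))
   by (field; lra).
  assert (0 < s * (a+2*s)^2) by (apply Rmult_lt_0_compat; nra).
  assert (0 < 2*w*GY/(P*GX)) by (apply Rdiv_lt_0_compat; nra).
  assert (0 <= 8*a*P*dGY/GX) by (unfold Rdiv; apply Rmult_le_pos; [repeat apply Rmult_le_pos; lra| apply Rlt_le, Rinv_0_lt_compat; auto]).
  assert ((s*s - w*w) / (s * (a+2*s)^2) < 0).
  { unfold Rdiv. apply Rmult_neg_pos. nra. apply Rinv_0_lt_compat; auto. }
  nra.
Qed.

Lemma Eder_lin a w s P GY GX dGY dGX al be c g : w <> 0 -> s <> 0 -> P <> 0 -> GX <> 0 ->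
  a + 2*s <> 0 ->
  Eder a w s P GY GX dGY dGX (al - be) (al*c + be*g) =
  al * Eder a w s P GY GX dGY dGX 1 c + be * Eder a w s P GY GX dGY dGX (-1) g.
Proof. intros. unfold Eder. field. auto. Qed.

Definition G := PSeries Kcoef.
Definition Hf (mu g0 c0 v g : R) : R :=
  let c := c0 + v * (g - g0) in
  2 * sqrt (sqrt (1 - g * c) / (g - c + 2 * sqrt ((1 - 2 * mu) ^ 2 - g * c))) *
  ((PI / 2 * G ((g - c - 2 * sqrt ((1 - 2 * mu) ^ 2 - g * c)) /
        (g - c + 2 * sqrt ((1 - 2 * mu) ^ 2 - g * c)))) /
   (PI / 2 * G (/ 2 * (1 - (g - c) / (2 * sqrt (1 - g * c)))))).

Lemma G_ex_derive y : 0 <= y < 1 -> ex_derive (fun x => G x) y.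
Proof. intros. apply ex_derive_PSeries, radius_K. rewrite Rabs_right; lra. Qed.

Lemma deriv_H mu g0 c0 v :
  0 < 1 + - (g0 * c0) ->
  0 < (1 - 2 * mu) * ((1 - 2 * mu) * 1) + - (g0 * c0) ->
  0 < g0 + - c0 ->
  0 <= (g0 + - c0 + - (2 * sqrt ((1 - 2 * mu) * ((1 - 2 * mu) * 1) + - (g0 * c0)))) *
     / (g0 + - c0 + 2 * sqrt ((1 - 2 * mu) * ((1 - 2 * mu) * 1) + - (g0 * c0))) < 1 ->
  0 <= / 2 * (1 + - ((g0 + - c0) * / (2 * sqrt (1 + - (g0 * c0))))) < 1 ->
  is_derive (Hf mu g0 c0 v) g0
   (Eder (g0 + - c0) (sqrt (1 + - (g0 * c0)))
      (sqrt ((1 - 2 * mu) * ((1 - 2 * mu) * 1) + - (g0 * c0)))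
      (sqrt (sqrt (1 + - (g0 * c0)) * / (g0 + - c0 + 2 * sqrt ((1 - 2 * mu) * ((1 - 2 * mu) * 1) + - (g0 * c0)))))
      (G ((g0 + - c0 + - (2 * sqrt ((1 - 2 * mu) * ((1 - 2 * mu) * 1) + - (g0 * c0)))) *
     / (g0 + - c0 + 2 * sqrt ((1 - 2 * mu) * ((1 - 2 * mu) * 1) + - (g0 * c0)))))
      (G (/ 2 * (1 + - ((g0 + - c0) * / (2 * sqrt (1 + - (g0 * c0)))))))
      (Derive (fun x => G x) ((g0 + - c0 + - (2 * sqrt ((1 - 2 * mu) * ((1 - 2 * mu) * 1) + - (g0 * c0)))) *
     / (g0 + - c0 + 2 * sqrt ((1 - 2 * mu) * ((1 - 2 * mu) * 1) + - (g0 * c0)))))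
      (Derive (fun x => G x) (/ 2 * (1 + - ((g0 + - c0) * / (2 * sqrt (1 + - (g0 * c0)))))))
      (1 - v) (c0 + g0 * v)).
Proof.
  intros H1 H2 H3 HY HX.
  assert (Hw : 0 < sqrt (1 + - (g0 * c0))) by (apply sqrt_lt_R0; lra).
  assert (Hs : 0 < sqrt ((1 - 2 * mu) * ((1 - 2 * mu) * 1) + - (g0 * c0))) by (apply sqrt_lt_R0; lra).
  set (w := sqrt (1 + - (g0 * c0))) in *.
  set (s := sqrt ((1 - 2 * mu) * ((1 - 2 * mu) * 1) + - (g0 * c0))) in *.
  assert (Ha : 0 < g0 + - c0 + 2 * s) by lra.
  assert (HQ : 0 < w * / (g0 + - c0 + 2 * s)) by (apply Rmult_lt_0_compat; [lra| apply Rinv_0_lt_compat; lra]).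
  assert (HP : 0 < sqrt (w * / (g0 + - c0 + 2 * s))) by (apply sqrt_lt_R0; lra).
  set (P := sqrt (w * / (g0 + - c0 + 2 * s))) in *.
  set (Y0 := (g0 + - c0 + - (2 * s)) * / (g0 + - c0 + 2 * s)) in *.
  set (X0 := / 2 * (1 + - ((g0 + - c0) * / (2 * w)))) in *.
  assert (HGX : 1 <= G X0) by (apply PSeries_K_pos; lra).
  assert (HPI := PI_RGT_0).
  unfold Hf. auto_derive; rewrite ?Rplus_opp_r, ?Rmult_0_r, ?Rplus_0_r.
  - fold w. fold s. fold P Y0 X0. repeat split; try lra.
    + apply G_ex_derive; lra.
    + apply G_ex_derive; lra.
    + apply Rmult_integral_contrapositive_currified; lra.
  - fold w s. fold P Y0 X0.
    set (dGY := Derive (fun x => G x) Y0).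
    set (dGX := Derive (fun x => G x) X0).
    set (GY := G Y0). set (GX := G X0) in *.
    unfold Eder. field. repeat split; lra.
Qed.

Lemma Cn_const n k : Cn n (fun _ => k).
Proof.
  revert k; induction n; intros k; simpl.
  - apply continuity_const. unfold constant. intros; reflexivity.
  - exists (fun _ => 0). split; auto. intros; apply derivable_pt_lim_const.
Qed.

Lemma smooth_lin c0 v g0 : smooth (fun g => c0 + v * (g - g0)).
Proof.
  intros n. destruct n; simpl.
  - intros x. apply derivable_continuous_pt. apply ex_derive_Reals_0. auto_derive. auto.
  - exists (fun _ => v). split; [|apply Cn_const].
    intros x. apply is_derive_Reals. auto_derive; auto. ring.
Qed.

Lemma loc_interval (h : R -> R) x : continuous h x -> 0 < h x < 1 ->
  locally x (fun t => 0 <= h t < 1).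
Proof.
  intros Hc Hx.
  assert (Hl : locally (h x) (fun y => 0 <= y < 1)).
  { assert (He : 0 < Rmin (h x) (1 - h x)) by (apply Rmin_pos; lra).
    exists (mkposreal _ He). intros y Hy.
    unfold ball in Hy; simpl in Hy. unfold AbsRing_ball, abs, minus, plus, opp in Hy; simpl in Hy.
    apply Rabs_def2 in Hy. destruct Hy.
    assert (Rmin (h x) (1 - h x) <= h x) by apply Rmin_l.
    assert (Rmin (h x) (1 - h x) <= 1 - h x) by apply Rmin_r.
    lra. }
  exact (Hc _ Hl).
Qed.

Lemma path_deriv mu g0 c0 v :
  0 < 1 + - (g0 * c0) ->
  0 < (1 - 2 * mu) * ((1 - 2 * mu) * 1) + - (g0 * c0) ->
  0 < g0 + - c0 ->
  0 < (g0 + - c0 + - (2 * sqrt ((1 - 2 * mu) * ((1 - 2 * mu) * 1) + - (g0 * c0)))) *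
     / (g0 + - c0 + 2 * sqrt ((1 - 2 * mu) * ((1 - 2 * mu) * 1) + - (g0 * c0))) < 1 ->
  0 < / 2 * (1 + - ((g0 + - c0) * / (2 * sqrt (1 + - (g0 * c0))))) < 1 ->
  is_derive (fun g => RS mu g (c0 + v * (g - g0))) g0
   (Eder (g0 + - c0) (sqrt (1 + - (g0 * c0)))
      (sqrt ((1 - 2 * mu) * ((1 - 2 * mu) * 1) + - (g0 * c0)))
      (sqrt (sqrt (1 + - (g0 * c0)) * / (g0 + - c0 + 2 * sqrt ((1 - 2 * mu) * ((1 - 2 * mu) * 1) + - (g0 * c0)))))
      (G ((g0 + - c0 + - (2 * sqrt ((1 - 2 * mu) * ((1 - 2 * mu) * 1) + - (g0 * c0)))) *
     / (g0 + - c0 + 2 * sqrt ((1 - 2 * mu) * ((1 - 2 * mu) * 1) + - (g0 * c0)))))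
      (G (/ 2 * (1 + - ((g0 + - c0) * / (2 * sqrt (1 + - (g0 * c0)))))))
      (Derive (fun x => G x) ((g0 + - c0 + - (2 * sqrt ((1 - 2 * mu) * ((1 - 2 * mu) * 1) + - (g0 * c0)))) *
     / (g0 + - c0 + 2 * sqrt ((1 - 2 * mu) * ((1 - 2 * mu) * 1) + - (g0 * c0)))))
      (Derive (fun x => G x) (/ 2 * (1 + - ((g0 + - c0) * / (2 * sqrt (1 + - (g0 * c0)))))))
      (1 - v) (c0 + g0 * v)).
Proof.
  intros H1 H2 H3 HY HX.
  apply is_derive_ext_loc with (Hf mu g0 c0 v).
  2: { apply deriv_H; lra. }
  set (Xg := fun g => / 2 * (1 - (g - (c0 + v * (g - g0))) / (2 * sqrt (1 - g * (c0 + v * (g - g0)))))).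
  set (Yg := fun g => (g - (c0 + v * (g - g0)) - 2 * sqrt ((1 - 2 * mu) ^ 2 - g * (c0 + v * (g - g0)))) /
        (g - (c0 + v * (g - g0)) + 2 * sqrt ((1 - 2 * mu) ^ 2 - g * (c0 + v * (g - g0))))).
  assert (Hw : 0 < sqrt (1 + - (g0 * c0))) by (apply sqrt_lt_R0; lra).
  assert (Hs : 0 < sqrt ((1 - 2 * mu) * ((1 - 2 * mu) * 1) + - (g0 * c0))) by (apply sqrt_lt_R0; lra).
  assert (HXl : locally g0 (fun t => 0 <= Xg t < 1)).
  { apply loc_interval.
    - apply (@ex_derive_continuous R_AbsRing R_NormedModule). unfold Xg. auto_derive.
      rewrite ?Rplus_opp_r, ?Rmult_0_r, ?Rplus_0_r. repeat split; lra.
    - unfold Xg. replace (c0 + v * (g0 - g0)) with c0 by ring. exact HX. }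
  assert (HYl : locally g0 (fun t => 0 <= Yg t < 1)).
  { apply loc_interval.
    - apply (@ex_derive_continuous R_AbsRing R_NormedModule). unfold Yg. auto_derive.
      rewrite ?Rplus_opp_r, ?Rmult_0_r, ?Rplus_0_r. repeat split; lra.
    - unfold Yg. replace (c0 + v * (g0 - g0)) with c0 by ring. exact HY. }
  eapply filter_imp; [|apply filter_and; [exact HXl|exact HYl]].
  intros t [HXt HYt]. unfold Xg, Yg in *. unfold Hf, RS, k1, r2. cbv zeta.
  rewrite !K_sqrt by assumption. reflexivity.
Qed.

Theorem mainTheorem6 (mu : R) (Hmu : 0 < mu <= 1 / 2) (g0 c0 : R)
  (HS : inS mu g0 c0) :
  exists f : R -> R, smooth f /\ f g0 = c0 /\
    exists l : R, derivable_pt_lim (fun g => RS mu g (f g)) g0 l /\ l <> 0.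
Proof.
  set (M := (1 - 2 * mu) * ((1 - 2 * mu) * 1)).
  assert (HM : (1 - 2 * mu) ^ 2 = M) by (unfold M; ring).
  assert (HM0 : 0 <= M < 1) by (unfold M; nra).
  set (r := sqrt (mu * (1 - mu))).
  assert (Hr0 : 0 <= r) by apply sqrt_pos.
  assert (Hr2 : r * r = mu - mu * mu) by (unfold r; rewrite sqrt_sqrt; nra).
  assert (Hmur : mu <= r) by nra.
  assert (H1M : 1 - M = 4 * (r * r)) by (unfold M; nra).
  assert (Facts : c0 < 0 /\ g0 * c0 < M /\ 0 < g0 - c0 /\ -2 < g0 + c0 /\ g0 + c0 < -2 * (1 - 2 * mu)).
  { unfold inS, cJ, ch in HS. fold r in HS. rewrite HM in HS.
    destruct HS as [[Hc [Hg1 Hg2]] | [Hc1 [Hc2 [Hg1 Hg2]]]].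
    - assert (c0 < 0) by lra.
      assert ((c0 + 1) * (c0 + 1) > 4 * (r * r)) by nra.
      repeat split; try lra; nra.
    - assert (c0 < 0) by lra.
      assert (Hgc : g0 * c0 < M).
      { assert (M / c0 * c0 = M) by (field; lra). nra. }
      assert (c0 * c0 > M) by (unfold M; nra).
      assert ((c0 + 1) * (c0 + 1) <= 4 * (r * r)) by nra.
      repeat split; try lra; nra. }
  destruct Facts as [Hc0 [Hb [Ha [Hp1 Hp2]]]].
  assert (H1 : 0 < 1 + - (g0 * c0)) by lra.
  assert (H2 : 0 < M + - (g0 * c0)) by lra.
  assert (H3 : 0 < g0 + - c0) by lra.
  set (a := g0 + - c0) in *.
  set (w := sqrt (1 + - (g0 * c0))).
  set (s := sqrt (M + - (g0 * c0))).
  assert (Hw : 0 < w) by (apply sqrt_lt_R0; lra).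
  assert (Hs : 0 < s) by (apply sqrt_lt_R0; lra).
  assert (Hww : w * w = 1 + - (g0 * c0)) by (apply sqrt_sqrt; lra).
  assert (Hss : s * s = M + - (g0 * c0)) by (apply sqrt_sqrt; lra).
  assert (Hsw : s < w) by nra.
  assert (Haa : a * a = (g0 + c0) * (g0 + c0) - 4 * (g0 * c0)) by (unfold a; ring).
  assert (Ha2w : a < 2 * w) by nra.
  assert (HpM : (g0 + c0) * (g0 + c0) > 4 * M) by (unfold M in *; nra).
  assert (Ha2s : 2 * s < a) by nra.
  assert (HX : 0 < / 2 * (1 + - (a * / (2 * w))) < 1).
  { assert (Ht : a * / (2 * w) * (2 * w) = a) by (field; lra).
    assert (0 < a * / (2 * w) < 1) by nra. lra. }
  assert (HY : 0 < (a + - (2 * s)) * / (a + 2 * s) < 1).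
  { assert (Ht : (a + - (2 * s)) * / (a + 2 * s) * (a + 2 * s) = a - 2 * s) by (field; lra).
    nra. }
  set (X0 := / 2 * (1 + - (a * / (2 * w)))) in *.
  set (Y0 := (a + - (2 * s)) * / (a + 2 * s)) in *.
  assert (HQ : 0 < w * / (a + 2 * s)) by (apply Rmult_lt_0_compat; [lra| apply Rinv_0_lt_compat; lra]).
  assert (HP : 0 < sqrt (w * / (a + 2 * s))) by (apply sqrt_lt_R0; lra).
  set (P := sqrt (w * / (a + 2 * s))) in *.
  assert (HGX : 1 <= G X0) by (apply PSeries_K_pos; lra).
  assert (HGY : 1 <= G Y0) by (apply PSeries_K_pos; lra).
  assert (HdGY : 0 <= Derive (fun x => G x) Y0).
  { assert (Hd : Derive (fun x => G x) Y0 = PSeries (PS_derive Kcoef) Y0).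
    { apply is_derive_unique. apply (is_derive_PSeries Kcoef Y0). apply radius_K. rewrite Rabs_right; lra. }
    rewrite Hd.
    apply PSeries_dK_nonneg; lra. }
  set (E := Eder a w s P (G Y0) (G X0) (Derive (fun x => G x) Y0) (Derive (fun x => G x) X0)).
  assert (HD : forall v, is_derive (fun g => RS mu g (c0 + v * (g - g0))) g0 (E (1 - v) (c0 + g0 * v))).
  { intros v. apply path_deriv; assumption. }
  assert (Hneg : E a (-2 * w * w) < 0) by (apply Eder_neg; lra).
  set (al := (a * g0 + (-2 * w * w)) / (g0 + c0)).
  assert (Hlin := Eder_lin a w s P (G Y0) (G X0) (Derive (fun x => G x) Y0) (Derive (fun x => G x) X0)
     al (al - a) c0 g0 ltac:(lra) ltac:(lra) ltac:(lra) ltac:(lra) ltac:(lra)).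
  fold E in Hlin.
  replace (al - (al - a)) with a in Hlin by ring.
  replace (al * c0 + (al - a) * g0) with (-2 * w * w) in Hlin
    by (unfold al, a; field; lra).
  destruct (Req_dec (E 1 c0) 0) as [H0 | H0].
  - exists (fun g => c0 + 1 * (g - g0)). split; [apply smooth_lin|]. split; [ring|].
    exists (E (1 - 1) (c0 + g0 * 1)). split.
    + apply is_derive_Reals. apply HD.
    + assert (Hl1 := Eder_lin a w s P (G Y0) (G X0) (Derive (fun x => G x) Y0) (Derive (fun x => G x) X0)
        1 1 c0 g0 ltac:(lra) ltac:(lra) ltac:(lra) ltac:(lra) ltac:(lra)).
      fold E in Hl1. replace (c0 + g0 * 1) with (1 * c0 + 1 * g0) by ring.
      rewrite Hl1, H0. intros Hz.
      rewrite H0 in Hlin. assert (E (-1) g0 = 0) by lra.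
      rewrite H in Hlin. lra.
  - exists (fun g => c0 + 0 * (g - g0)). split; [apply smooth_lin|]. split; [ring|].
    exists (E (1 - 0) (c0 + g0 * 0)). split.
    + apply is_derive_Reals. apply HD.
    + replace (1 - 0) with 1 by ring. replace (c0 + g0 * 0) with c0 by ring. exact H0.
Qed.
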